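(* For each $q\in\mathbb{C}\setminus\{0\}$ and $n\in\mathbb{N}$, $\mathcal{O}_q(\mathbb{B}_\infty^n)=\mathcal{O}_q(\mathbb{D}_\infty^n)$ as subspaces of the space of formal series $\sum_{k\in\mathbb{Z}_+^n}c_kx^k$ and as Fréchet algebras.
   Context: $\mathcal{O}_q^{\mathrm{reg}}(\mathbb{C}^n)$: algebra generated by $x_1,\dots,x_n$ with $x_ix_j=qx_jx_i$ ($i<j$); basis $x^k=x_1^{k_1}\cdots x_n^{k_n}$, $k\in\mathbb{Z}_+^n$. Put $w_q(k)=1$ if $|q|\ge1$ and $w_q(k)=|q|^{\sum_{i<j}k_ik_j}$ if $|q|<1$; $u_q(k)=|q|^{\sum_{i<j}k_ik_j}$; $[m]_q=1+\dots+q^{m-1}$, $[m]_q!=[1]_q\cdots[m]_q$, $[0]_q!=1$, $[k]_q!=\prod_i[k_i]_q!$, $|k|=\sum k_i$. For $f=\sum_kc_kx^k$: $\|f\|_{\mathbb{D},\rho}=\sum_k|c_k|w_q(k)\rho^{|k|}$ and $\|f\|_{\mathbb{B},\rho}=\sum_k|c_k|\big([k]_{|q|^2}!/[|k|]_{|q|^2}!\big)^{1/2}u_q(k)\rho^{|k|}$. $\mathcal{O}_q(\mathbb{D}_\infty^n)$ (resp. $\mathcal{O}_q(\mathbb{B}_\infty^n)$) is the completion of $\mathcal{O}_q^{\mathrm{reg}}(\mathbb{C}^n)$ with respect to the norms $\|\cdot\|_{\mathbb{D},\rho}$ (resp. $\|\cdot\|_{\mathbb{B},\rho}$), $\rho\in(0,\infty)$,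 realized as formal series with all these norms finite. *)

(* Defs.v *)
From Stdlib Require Import Reals List.
Import ListNotations.
Open Scope R_scope.

Definition CC : Type := (R * R)%type.
Definition C0 : CC := (0, 0).
Definition Cmod (z : CC) : R := sqrt (fst z * fst z + snd z * snd z).

(* Multi-indices k in Z_+^n are lists of naturals of length n. *)
Definition mindex (n : nat) (k : list nat) : Prop := length k = n.

Definition mlen (k : list nat) : nat := fold_right Nat.add 0%nat k.

(* sum_{i<j} k_i k_j *)
Fixpoint cross (k : list nat) : nat :=
  match k with
  | [] => 0%nat
  | a :: k' => (a * mlen k' + cross k')%nat
  end.

Fixpoint qint (t : R) (m : nat) : R :=
  match m with
  | O => 0
  | S m' => qint t m' + t ^ m'
  end.

Fixpoint qfact (t : R) (m : nat) : R :=
  match m with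
  | O => 1
  | S m' => qfact t m' * qint t m
  end.

Definition qfactm (t : R) (k : list nat) : R :=
  fold_right (fun a acc => qfact t a * acc) 1 k.

Definition w_q (q : CC) (k : list nat) : R :=
  if Rle_dec 1 (Cmod q) then 1 else Cmod q ^ cross k.

Definition u_q (q : CC) (k : list nat) : R := Cmod q ^ cross k.

Definition wB (q : CC) (k : list nat) : R :=
  sqrt (qfactm (Cmod q ^ 2) k / qfact (Cmod q ^ 2) (mlen k)) * u_q q k.

(* A formal series sum_k c_k x^k is given by its coefficient function
   (only values on multi-indices of length n matter). *)
Definition fseries : Type := list nat -> CC.

Definition psum (wt : list nat -> R) (f : fseries) (rho : R) (L : list (list nat)) : R :=
  fold_right (fun k acc => Cmod (f k) * wt k * rho ^ (mlen k) + acc) 0 L.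

(* The (possibly infinite) weighted norm sum_k |c_k| wt(k) rho^|k| is <= M:
   every finite partial sum over distinct multi-indices in Z_+^n is <= M. *)
Definition wnorm_le (n : nat) (wt : list nat -> R) (f : fseries) (rho M : R) : Prop :=
  forall L : list (list nat), NoDup L -> Forall (mindex n) L -> psum wt f rho L <= M.

Definition normD_le (q : CC) (n : nat) (f : fseries) (rho M : R) : Prop :=
  wnorm_le n (w_q q) f rho M.
Definition normB_le (q : CC) (n : nat) (f : fseries) (rho M : R) : Prop :=
  wnorm_le n (wB q) f rho M.

Definition in_OD (q : CC) (n : nat) (f : fseries) : Prop :=
  forall rho, 0 < rho -> exists M, normD_le q n f rho M.
Definition in_OB (q : CC) (n : nat) (f : fseries) : Prop :=
  forall rho, 0 < rho -> exists M, normB_le q n f rho M.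

(* Main.v *)
Require Import Defs.
From Stdlib Require Import Reals List Lra Lia Psatz.
Import ListNotations.
Open Scope R_scope.

Lemma qint_nonneg s m : 0 <= s -> 0 <= qint s m.
Proof. intro Hs; induction m; simpl; [lra|]. pose proof (pow_le s m Hs); lra. Qed.

Lemma qint_ge1 s m : 0 <= s -> 1 <= qint s (S m).
Proof. intro Hs; induction m; simpl in *; [lra|]. pose proof (pow_le s (S m) Hs); simpl in H; lra. Qed.

Lemma qint_geom s m : qint s m * (1 - s) = 1 - s ^ m.
Proof. induction m; simpl; [lra|]. rewrite Rmult_plus_distr_r, IHm. ring. Qed.

Lemma qint_add s a m : qint s (a + m) = qint s a + s ^ a * qint s m.
Proof. induction m; simpl. rewrite Nat.add_0_r; ring.
rewrite Nat.add_succ_r; simpl. rewrite IHm, pow_add. ring. Qed.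

Lemma qfact_ge1 s m : 0 <= s -> 1 <= qfact s m.
Proof. intro Hs; induction m; simpl; [lra|].
pose proof (qint_ge1 s m Hs). simpl in H. nra. Qed.

Lemma qfact_le s m : 0 <= s < 1 -> qfact s m <= (1/(1-s)) ^ m.
Proof. intros Hs; induction m; simpl; [lra|].
assert (qint s (S m) <= 1/(1-s)).
{ pose proof (qint_geom s (S m)). pose proof (pow_le s (S m) (proj1 Hs)).
  apply (Rmult_le_reg_r (1-s)); [lra|]. unfold Rdiv. rewrite Rmult_1_l, Rinv_l by lra. simpl in *; lra. }
pose proof (qfact_ge1 s m (proj1 Hs)). pose proof (qint_ge1 s m (proj1 Hs)). simpl in *. nra. Qed.

Lemma P1 s a m : 0 <= s -> qfact s a * qfact s m <= qfact s (a + m).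
Proof. intro Hs; induction m; simpl. rewrite Nat.add_0_r; lra.
rewrite Nat.add_succ_r; simpl.
assert (qint s (S m) <= qint s (S (a + m))).
{ replace (S (a+m)) with (S m + a)%nat by lia. rewrite qint_add.
  pose proof (qint_nonneg s a Hs). pose proof (pow_le s (S m) Hs). nra. }
pose proof (qfact_ge1 s a Hs). pose proof (qfact_ge1 s m Hs). pose proof (qint_ge1 s m Hs).
change (qfact s a * (qfact s m * qint s (S m)) <= qfact s (a + m) * qint s (S (a + m))).
rewrite <- Rmult_assoc. apply Rmult_le_compat; try lra. nra. Qed.

Lemma P2 s a m : 1 <= s -> s ^ (a * m) * qfact s a * qfact s m <= qfact s (a + m).
Proof. intro Hs; induction m; simpl. rewrite Nat.mul_0_r, Nat.add_0_r; simpl; lra.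
rewrite Nat.add_succ_r; simpl.
assert (s ^ a * qint s (S m) <= qint s (S (a + m))).
{ replace (S (a+m)) with (a + S m)%nat by lia. rewrite qint_add.
  pose proof (qint_nonneg s a ltac:(lra)). lra. }
replace (a * S m)%nat with (a * m + a)%nat by lia. rewrite pow_add.
pose proof (qint_ge1 s m ltac:(lra)). pose proof (pow_le s a ltac:(lra)).
pose proof (pow_le s (a*m) ltac:(lra)).
pose proof (qfact_ge1 s a ltac:(lra)). pose proof (qfact_ge1 s m ltac:(lra)).
simpl in *.
set (X := qint s m + s ^ m) in *. set (Y := qint s (a+m) + s^(a+m)) in *.
apply Rle_trans with (qfact s (a+m) * (s^a * X)).
- replace (s ^ (a * m) * s ^ a * qfact s a * (qfact s m * X)) with
    ((s ^ (a * m) * qfact s a * qfact s m) * (s^a * X)) by ring.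
  apply Rmult_le_compat_r; nra.
- apply Rmult_le_compat_l; [pose proof (qfact_ge1 s (a+m) ltac:(lra)); lra | lra].
Qed.

Lemma P3 s : 1 <= s -> forall N a m, (a + m = N)%nat ->
  qfact s (a + m) <= 2 ^ (a + m) * s ^ (a * m) * qfact s a * qfact s m.
Proof. intros Hs N. induction N; intros a m HN.
- assert (a = 0%nat) by lia; assert (m = 0%nat) by lia; subst; simpl; lra.
- destruct a as [|a]. simpl. pose proof (pow_le 2 m ltac:(lra)).
  pose proof (qfact_ge1 s m ltac:(lra)).
  assert (1 <= 2 ^ m) by (apply pow_R1_Rle; lra). nra.
  destruct m as [|m]. rewrite !Nat.add_0_r, Nat.mul_0_r. change (s ^ 0) with 1. change (qfact s 0) with 1.
  pose proof (qfact_ge1 s (S a) ltac:(lra)).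
  assert (1 <= 2 ^ S a) by (apply pow_R1_Rle; lra).
  replace (2 ^ S a * 1 * qfact s (S a) * 1) with (2 ^ S a * qfact s (S a)) by ring. nra.
  pose proof (IHN a (S m) ltac:(lia)) as H1.
  pose proof (IHN (S a) m ltac:(lia)) as H2.
  replace (S a + S m)%nat with (S (a + S m)) by lia.
  change (qfact s (S (a + S m))) with (qfact s (a + S m) * qint s (S (a + S m))).
  replace (S (a + S m)) with (S a + S m)%nat by lia.
  rewrite qint_add.
  replace (S a + m)%nat with (a + S m)%nat in H2 by lia.
  change (qfact s (S a)) with (qfact s a * qint s (S a)) in *.
  change (qfact s (S m)) with (qfact s m * qint s (S m)) in *.
  set (Fa := qfact s a) in *. set (Fm := qfact s m) in *.
  set (Ia := qint s (S a)) in *. set (Im := qint s (S m)) in *.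
  set (G := qfact s (a + S m)) in *.
  assert (hFa : 1 <= Fa) by (apply qfact_ge1; lra).
  assert (hFm : 1 <= Fm) by (apply qfact_ge1; lra).
  assert (hIa : 1 <= Ia) by (apply qint_ge1; lra).
  assert (hIm : 1 <= Im) by (apply qint_ge1; lra).
  assert (hX1 : s ^ (a * S m) <= s ^ (S a * S m)).
  { apply Rle_pow; [lra| nia]. }
  assert (hX2 : s ^ (S a * m) * s ^ (S a) = s ^ (S a * S m)).
  { rewrite <- pow_add. f_equal. lia. }
  change (2 ^ S (a + S m)) with (2 * 2 ^ (a + S m)).
  set (P := 2 ^ (a + S m)) in *. set (X := s ^ (S a * S m)) in *.
  set (u := s ^ (a * S m)) in *. set (v := s ^ (S a * m)) in *. set (w := s ^ S a) in *.
  assert (0 <= u) by (apply pow_le; lra).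
  assert (0 <= w) by (apply pow_le; lra).
  assert (0 <= P) by (apply pow_le; lra).
  assert (0 <= G) by (pose proof (qfact_ge1 s (a + S m) ltac:(lra)); unfold G; lra).
  assert (E1 : G * Ia <= P * X * Fa * Fm * Im * Ia).
  { apply Rle_trans with (P * u * Fa * (Fm * Im) * Ia). apply Rmult_le_compat_r; lra.
    replace (P * u * Fa * (Fm * Im) * Ia) with (u * (P * Fa * Fm * Im * Ia)) by ring.
    replace (P * X * Fa * Fm * Im * Ia) with (X * (P * Fa * Fm * Im * Ia)) by ring.
    apply Rmult_le_compat_r; [|lra]. repeat apply Rmult_le_pos; lra. }
  assert (E2 : G * (w * Im) <= P * X * Fa * Fm * Im * Ia).
  { apply Rle_trans with (P * v * (Fa * Ia) * Fm * (w * Im)). apply Rmult_le_compat_r; [nra|lra].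
    rewrite <- hX2. right; ring. }
  replace (G * (Ia + w * Im)) with (G * Ia + G * (w * Im)) by ring.
  replace (2 ^ (S a + S m)) with (2 * P) by (unfold P; replace (S a + S m)%nat with (S (a + S m)) by lia; reflexivity).
  replace (2 * P * X * (Fa * Ia) * (Fm * Im)) with (P * X * Fa * Fm * Im * Ia + P * X * Fa * Fm * Im * Ia) by ring.
  lra.
Qed.

Lemma qfactm_ge1 s k : 0 <= s -> 1 <= qfactm s k.
Proof. intro Hs; induction k; simpl; [lra|]. pose proof (qfact_ge1 s a Hs); nra. Qed.

Lemma L1 s k : 0 <= s -> qfactm s k <= qfact s (mlen k).
Proof. intro Hs; induction k as [|a k IH]; simpl; [lra|].
pose proof (qfact_ge1 s a Hs). pose proof (P1 s a (mlen k) Hs).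
unfold mlen in *. simpl. apply Rle_trans with (qfact s a * qfact s (fold_right Nat.add 0%nat k)); [|exact H0].
apply Rmult_le_compat_l; lra. Qed.

Lemma L2 s k : 1 <= s -> s ^ (cross k) * qfactm s k <= qfact s (mlen k).
Proof. intro Hs; induction k as [|a k IH]; simpl; [lra|].
pose proof (qfact_ge1 s a ltac:(lra)). pose proof (P2 s a (mlen k) Hs).
pose proof (pow_le s (a * mlen k) ltac:(lra)).
change (fold_right Nat.add 0%nat k) with (mlen k).
rewrite pow_add.
apply Rle_trans with (s ^ (a * mlen k) * qfact s a * qfact s (mlen k)); [|exact H0].
replace (s ^ (a * mlen k) * s ^ cross k * (qfact s a * qfactm s k)) with
  (s ^ (a * mlen k) * qfact s a * (s ^ cross k * qfactm s k)) by ring.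
apply Rmult_le_compat_l; nra. Qed.

Lemma L3 s k : 1 <= s -> qfact s (mlen k) <= (2 ^ length k) ^ (mlen k) * s ^ (cross k) * qfactm s k.
Proof. intro Hs; induction k as [|a k IH]; simpl; [lra|].
change (fold_right Nat.add 0%nat k) with (mlen k).
set (m := mlen k) in *.
pose proof (P3 s Hs _ a m eq_refl) as H.
pose proof (qfact_ge1 s a ltac:(lra)).
pose proof (pow_le s (a * m) ltac:(lra)).
pose proof (pow_le s (cross k) ltac:(lra)).
pose proof (qfactm_ge1 s k ltac:(lra)).
assert (h2 : 1 <= 2 ^ length k) by (apply pow_R1_Rle; lra).
assert (h3 : (2 ^ length k) ^ m <= (2 ^ length k) ^ (a + m)) by (apply Rle_pow; [lra|lia]).
assert (0 <= 2 ^ (a + m)) by (apply pow_le; lra).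
eapply Rle_trans; [exact H|].
apply Rle_trans with (2 ^ (a + m) * s ^ (a * m) * qfact s a * ((2 ^ length k) ^ (a + m) * s ^ cross k * qfactm s k)).
{ apply Rmult_le_compat_l; [repeat apply Rmult_le_pos; lra|].
  eapply Rle_trans; [exact IH|]. apply Rmult_le_compat_r; [lra|]. apply Rmult_le_compat_r; lra. }
rewrite (pow_add s), (Rpow_mult_distr 2). right; ring. Qed.

Lemma weights (q : CC) (n : nat) : exists E, 1 <= E /\ forall k, length k = n ->
  0 <= wB q k /\ wB q k <= w_q q k /\ w_q q k <= E ^ (mlen k) * wB q k.
Proof.
set (t := Cmod q). assert (ht : 0 <= t) by apply sqrt_pos.
set (s := t ^ 2). assert (hs : 0 <= s) by (apply pow_le; lra).
unfold wB, w_q, u_q. fold t. fold s.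
destruct (Rle_dec 1 t) as [H1|H1].
- exists (2 ^ n). split; [apply pow_R1_Rle; lra|]. intros k Hk.
  assert (hs1 : 1 <= s) by (unfold s; nra).
  set (m := mlen k). set (c := cross k).
  pose proof (L2 s k hs1) as A2. pose proof (L3 s k hs1) as A3. rewrite Hk in A3. fold m c in A2, A3.
  pose proof (qfactm_ge1 s k hs). pose proof (qfact_ge1 s m hs).
  set (Q := qfactm s k) in *. set (F := qfact s m) in *.
  set (r := Q / F). assert (hr : 0 <= r) by (unfold r; apply Rmult_le_pos; [lra| apply Rlt_le, Rinv_0_lt_compat; lra]).
  assert (hrF : r * F = Q) by (unfold r; field; lra).
  set (y := sqrt r * t ^ c).
  assert (hy0 : 0 <= y) by (unfold y; apply Rmult_le_pos; [apply sqrt_pos| apply pow_le; lra]).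
  assert (hy2 : y * y = r * s ^ c).
  { unfold y, s. replace (sqrt r * t ^ c * (sqrt r * t ^ c)) with ((sqrt r * sqrt r) * (t^c * t^c)) by ring.
    rewrite sqrt_sqrt by lra. rewrite <- pow_mult, <- pow_add. f_equal. f_equal. lia. }
  assert (hE : 1 <= (2 ^ n) ^ m) by (apply pow_R1_Rle; apply pow_R1_Rle; lra).
  assert (hsc : 0 <= s ^ c) by (apply pow_le; lra).
  split; [exact hy0|]. split.
  + assert (y * y <= 1).
    { rewrite hy2. apply (Rmult_le_reg_r F); [lra|].
      replace (r * s ^ c * F) with (s ^ c * (r * F)) by ring. rewrite hrF. lra. }
    nra.
  + set (E := (2 ^ n) ^ m) in *.
    assert (1 <= E * (y * y)).
    { rewrite hy2. apply (Rmult_le_reg_r F); [lra|].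
      replace (E * (r * s ^ c) * F) with (E * s ^ c * (r * F)) by ring. rewrite hrF. lra. }
    assert (E * y * (E * y) >= 1) by nra.
    nra.
- exists (1 / (1 - s)).
  assert (hs1 : s < 1) by (unfold s; nra).
  assert (hE1 : 1 <= 1 / (1 - s)).
  { apply (Rmult_le_reg_r (1 - s)); [lra|]. unfold Rdiv. rewrite Rmult_assoc, Rinv_l by lra. lra. }
  split; [exact hE1|]. intros k Hk.
  set (m := mlen k). set (c := cross k).
  pose proof (L1 s k hs) as A1. pose proof (qfact_le s m (conj hs hs1)) as A3. fold m in A1.
  pose proof (qfactm_ge1 s k hs). pose proof (qfact_ge1 s m hs).
  set (Q := qfactm s k) in *. set (F := qfact s m) in *.
  set (r := Q / F). assert (hr : 0 <= r) by (unfold r; apply Rmult_le_pos; [lra| apply Rlt_le, Rinv_0_lt_compat; lra]).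
  assert (hrF : r * F = Q) by (unfold r; field; lra).
  assert (hr1 : r <= 1) by (apply (Rmult_le_reg_r F); [lra|]; rewrite hrF; lra).
  set (E := (1 / (1 - s)) ^ m) in *.
  assert (hEr : 1 <= E * r).
  { apply (Rmult_le_reg_r F); [lra|]. replace (E * r * F) with (E * (r * F)) by ring. rewrite hrF.
    assert (0 <= E) by (unfold E; apply pow_le; lra). nra. }
  assert (hsr : sqrt r * sqrt r = r) by (apply sqrt_sqrt; lra).
  assert (0 <= sqrt r) by apply sqrt_pos.
  assert (sqrt r <= 1) by nra.
  assert (r <= sqrt r) by nra.
  assert (htc : 0 <= t ^ c) by (apply pow_le; lra).
  split; [nra|]. split; [nra|].
  assert (0 <= E) by (unfold E; apply pow_le; lra).
  assert (1 <= E * sqrt r) by nra. nra.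
Qed.

Lemma psum_cmp n (w1 w2 : list nat -> R) f r1 r2 L :
  (forall k, length k = n -> w1 k * r1 ^ mlen k <= w2 k * r2 ^ mlen k) ->
  Forall (mindex n) L -> psum w1 f r1 L <= psum w2 f r2 L.
Proof. intros Hw HL; induction HL; simpl; [lra|].
assert (0 <= Cmod (f x)) by apply sqrt_pos.
pose proof (Hw x H).
assert (Cmod (f x) * w1 x * r1 ^ mlen x <= Cmod (f x) * w2 x * r2 ^ mlen x).
{ rewrite !Rmult_assoc. apply Rmult_le_compat_l; lra. }
lra. Qed.

Theorem corollary4p3 (q : CC) (n : nat) (hq : q <> C0) :
  (forall f : fseries, in_OB q n f <-> in_OD q n f) /\
  (forall rho, 0 < rho -> exists rho' Cst, 0 < rho' /\ 0 < Cst /\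
     forall (f : fseries) (M : R), normD_le q n f rho' M -> normB_le q n f rho (Cst * M)) /\
  (forall rho, 0 < rho -> exists rho' Cst, 0 < rho' /\ 0 < Cst /\
     forall (f : fseries) (M : R), normB_le q n f rho' M -> normD_le q n f rho (Cst * M)).
Proof.
destruct (weights q n) as [E [HE HW]].
assert (DB : forall rho, 0 < rho -> forall f M, normD_le q n f rho M -> normB_le q n f rho M).
{ intros rho Hr f M H L HN HL. eapply Rle_trans; [|apply (H L HN HL)].
  apply (psum_cmp n); [|exact HL]. intros k Hk. destruct (HW k Hk) as [? [? ?]].
  apply Rmult_le_compat_r; [apply pow_le; lra| lra]. }
assert (BD : forall rho, 0 < rho -> forall f M, normB_le q n f (rho * E) M -> normD_le q n f rho M).
{ intros rho Hr f M H L HN HL. eapply Rle_trans; [|apply (H L HN HL)].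
  apply (psum_cmp n); [|exact HL]. intros k Hk. destruct (HW k Hk) as [? [? ?]].
  rewrite Rpow_mult_distr.
  assert (0 <= rho ^ mlen k) by (apply pow_le; lra).
  replace (wB q k * (rho ^ mlen k * E ^ mlen k)) with ((E ^ mlen k * wB q k) * rho ^ mlen k) by ring.
  apply Rmult_le_compat_r; lra. }
split; [|split].
- intro f; split; intros H rho Hr.
  + destruct (H (rho * E) ltac:(nra)) as [M HM]. exists M. apply BD; auto.
  + destruct (H rho Hr) as [M HM]. exists M. apply DB; auto.
- intros rho Hr. exists rho, 1. split; [lra|]. split; [lra|].
  intros f M H. rewrite Rmult_1_l. apply DB; auto.
- intros rho Hr. exists (rho * E), 1. split; [nra|]. split; [lra|].
  intros f M H. rewrite Rmult_1_l. apply BD; auto.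
Qed.
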